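(* Let $L_s, L_t\ge 0$ be integers and let $\beta=M/N$ with $M,N$ positive integers, $\gcd(M,N)=1$. Consider the multiset of positions $\{Nn+Mk: 0\le n\le L_s,\ 0\le k\le L_t\}$ (these are the positions $\tfrac{2d}{\lambda_b}(n+\beta k)$ under the normalization $\tfrac{2d}{\lambda_b}=N$), and let $\zeta_0<\zeta_1<\cdots<\zeta_{R_r-1}$ be its distinct values. Let $\mathbf{P}\in\{0,1\}^{(L_s+1)(L_t+1)\times R_r}$ be the matrix whose row with index $k(L_s+1)+n$ (rows indexed from $0$) has a single $1$, located in the column $c$ with $\zeta_c = Nn+Mk$, and zeros elsewhere. Then $$\mathrm{rank}(\mathbf{P})=R_r=\begin{cases} N(L_s+1)+M(L_t+1)-MN, & M<L_s+1 \text{ and } N<L_t+1,\\ (L_s+1)(L_t+1), & M\ge L_s+1 \text{ or } N\ge L_t+1.\end{cases}$$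
   Context: The matrix $\mathbf{P}$ arises in an airborne co-pulsing frequency diverse array radar: the Kronecker product of the coarray time steering vector $[e^{\mathrm{j}2\pi\beta\bar f k}]_{k=0}^{L_t}$ and receive steering vector $[e^{\mathrm{j}2\pi\bar f n}]_{n=0}^{L_s}$ equals $\mathbf{P}\mathbf{v}_{Rb}(\bar f)$, where $\mathbf{v}_{Rb}$ collects the exponentials at the distinct positions. Here $\beta = 2\nu_p T/d$ (platform velocity $\nu_p$, pulse repetition interval $T$, element spacing $d$), and the theorem is stated under the assumption $2d/\lambda_b=N$ with $\lambda_b$ the reference wavelength. *)

(* Defs.v *)
From HB Require Import structures.
From mathcomp Require Import all_boot all_order all_algebra.
Set Implicit Arguments. Unset Strict Implicit. Unset Printing Implicit Defensive.
Import Order.TTheory GRing.Theory Num.Theory.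

(* The multiset of normalized positions N*n + M*k, listed with row index
   k*(Ls+1) + n  (k outer, n inner). *)
Definition positions (M N Ls Lt : nat) : seq nat :=
  [seq N * n + M * k | k <- iota 0 Lt.+1, n <- iota 0 Ls.+1].

Definition zetas (M N Ls Lt : nat) : seq nat :=
  sort leq (undup (positions M N Ls Lt)).

Definition Rr (M N Ls Lt : nat) : nat := size (zetas M N Ls Lt).

Definition Pmat (F : fieldType) (M N Ls Lt : nat)
  : 'M[F]_(Ls.+1 * Lt.+1, Rr M N Ls Lt) :=
  \matrix_(i < Ls.+1 * Lt.+1, c < Rr M N Ls Lt)
    (if nth 0%N (zetas M N Ls Lt) c == (N * (i %% Ls.+1) + M * (i %/ Ls.+1))%N then 1%R else 0%R).

(* Main.v *)
Require Import Defs.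
From HB Require Import structures.
From mathcomp Require Import all_boot all_order all_algebra.
From mathcomp Require Import zify.
Import GRing.Theory.

Lemma key M N n k n' k' : (0 < M)%N -> coprime M N ->
  (N*n + M*k = N*n' + M*k')%N -> (n <= n')%N ->
  exists t, (n' = n + M*t /\ k = k' + N*t)%N.
Proof.
move=> M0 co E le.
have E2 : (M * k = N * (n' - n) + M * k')%N.
  have -> : (N * (n' - n) = N * n' - N * n)%N by rewrite mulnBr.
  have : (N * n <= N * n')%N by rewrite leq_mul2l le orbT.
  lia.
have : (M %| N * (n' - n))%N.
  by rewrite -(dvdn_addl _ (dvdn_mulr k' (dvdnn M))) -E2 dvdn_mulr.
rewrite Gauss_dvdr // => /dvdnP [t Ht].
exists t; split; first lia.
apply/eqP; rewrite -(eqn_pmul2l M0); apply/eqP.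
by rewrite E2 Ht; nia.
Qed.

Lemma eq_cases M N n k n' k' : (0 < M)%N -> (0 < N)%N -> coprime M N ->
  (N*n + M*k = N*n' + M*k')%N ->
  (n = n' /\ k = k') \/ (n + M <= n' /\ k' + N <= k)%N \/ (n' + M <= n /\ k + N <= k')%N.
Proof.
move=> M0 N0 co E.
case: (leqP n n') => le.
  have [[|t] [H1 H2]] := @key M N n k n' k' M0 co E le.
    by left; lia.
  by right; left; nia.
have [[|t] [H1 H2]] := @key M N n' k' n k M0 co (esym E) (ltnW le).
  by left; lia.
by right; right; nia.
Qed.

Lemma count_pos M N Ls Lt : (0 < M)%N -> (0 < N)%N -> coprime M N ->
  size (undup (positions M N Ls Lt)) =
    (if (M < Ls.+1) && (N < Lt.+1)
     then N * Ls.+1 + M * Lt.+1 - M * N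
     else Ls.+1 * Lt.+1)%N.
Proof.
move=> M0 N0 co.
case: ifP => [/andP [HM HN] | Hc].
  set s1 := [seq (N * n + M * k)%N | k <- iota 0 Lt.+1, n <- iota 0 M].
  set s2 := [seq (N * n + M * k)%N | k <- iota (Lt.+1 - N) N, n <- iota M (Ls.+1 - M)].
  have u1 : uniq s1.
    apply: allpairs_uniq; rewrite ?iota_uniq //.
    move=> [k n] [k' n'] /allpairsP [[a b] [ha hb [-> ->]]]
      /allpairsP [[a' b'] [ha' hb' [-> ->]]] /= E.
    move: ha hb ha' hb'; rewrite !mem_iota => ha hb ha' hb'.
    case: (eq_cases _ _ _ _ _ _ M0 N0 co E) => [[-> ->] //|]; rewrite /= in ha hb ha' hb'; lia.
  have u2 : uniq s2.
    apply: allpairs_uniq; rewrite ?iota_uniq //.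
    move=> [k n] [k' n'] /allpairsP [[a b] [ha hb [-> ->]]]
      /allpairsP [[a' b'] [ha' hb' [-> ->]]] /= E.
    move: ha hb ha' hb'; rewrite !mem_iota => ha hb ha' hb'.
    case: (eq_cases _ _ _ _ _ _ M0 N0 co E) => [[-> ->] //|]; rewrite /= in ha hb ha' hb'; lia.
  have d12 : ~~ has (mem s1) s2.
    apply/hasPn => x /allpairsP [[a b] [ha hb ->]].
    apply/negP => /allpairsP [[a' b'] [ha' hb' /= E]].
    move: ha hb ha' hb'; rewrite !mem_iota => ha hb ha' hb'.
    rewrite /= in ha hb ha' hb'; have := eq_cases _ _ _ _ _ _ M0 N0 co E; lia.
  have u : uniq (s1 ++ s2) by rewrite cat_uniq u1 u2 d12.
  have memE : undup (positions M N Ls Lt) =i s1 ++ s2.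
    move=> x; rewrite mem_undup; apply/idP/idP.
      rewrite /positions; case/allpairsP => [[k n] [hk hn ->]]; rewrite mem_cat.
      move: hk hn; rewrite !mem_iota /= => hk hn.
      have : (n <= Ls)%N by lia.
      have : (k <= Lt)%N by lia.
      clear hk hn.
      elim: n {-2}n (leqnn n) k => [|m IH] n hn k hk hn'.
        apply/orP; left; apply/allpairsP; exists (k, n); rewrite !mem_iota /=.
        split => //; lia.
      case: (ltnP n M) => hnM.
        apply/orP; left; apply/allpairsP; exists (k, n); rewrite !mem_iota /=.
        split => //; lia.
      case: (leqP (k + N) Lt) => hkN.
        have -> : (N * n + M * k = N * (n - M) + M * (k + N))%N.
          rewrite mulnBr mulnDr; nia.
        apply: IH; lia.
      apply/orP; right; apply/allpairsP; exists (k, n); rewrite !mem_iota /=.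
      split => //; lia.
    rewrite mem_cat; case/orP => /allpairsP [[k n] [hk hn ->]]; move: hk hn; rewrite !mem_iota /= => hk hn;
      apply/allpairsP; exists (k, n); rewrite !mem_iota /=; split => //; lia.
  rewrite (perm_size (uniq_perm (undup_uniq _) u memE)) size_cat !size_allpairs !size_iota.
  nia.
have u : uniq (positions M N Ls Lt).
  apply: allpairs_uniq; rewrite ?iota_uniq //.
  move=> [k n] [k' n'] /allpairsP [[a b] [ha hb [-> ->]]]
    /allpairsP [[a' b'] [ha' hb' [-> ->]]] /= E.
  move: ha hb ha' hb'; rewrite !mem_iota => ha hb ha' hb'.
  move: Hc => /negbT; rewrite negb_and -!leqNgt => Hc.
  case: (eq_cases _ _ _ _ _ _ M0 N0 co E) => [[-> ->] //|]; rewrite /= in ha hb ha' hb'.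
  case/orP: Hc => Hc; lia.
by rewrite undup_id // size_allpairs !size_iota mulnC.
Qed.
Lemma rankP (F : fieldType) M N Ls Lt :
  \rank (Pmat F M N Ls Lt) = Rr M N Ls Lt.
Proof.
have uz : uniq (zetas M N Ls Lt) by rewrite sort_uniq undup_uniq.
have ex : forall c : 'I_(Rr M N Ls Lt), exists i : 'I_(Ls.+1 * Lt.+1),
    nth 0%N (zetas M N Ls Lt) c = (N * (i %% Ls.+1) + M * (i %/ Ls.+1))%N.
  move=> c.
  have : nth 0%N (zetas M N Ls Lt) c \in positions M N Ls Lt.
    by rewrite -mem_undup -(mem_sort leq) mem_nth.
  case/allpairsP => [[k n] [kin nin ->]].
  move: kin nin; rewrite !mem_iota /= => kin nin.
  have lti : (k * Ls.+1 + n < Ls.+1 * Lt.+1)%N by nia.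
  exists (Ordinal lti) => /=.
  by rewrite modnMDl modn_small ?divnMDl ?divn_small ?addn0 //; lia.
have [g Hg] := fin_all_exists ex.
apply/eqP; rewrite eqn_leq rank_leq_col /=.
have E : rowsub g (Pmat F M N Ls Lt) = 1%:M%R.
  apply/matrixP => c c'; rewrite !mxE -Hg.
  by rewrite (nth_uniq 0%N) ?ltn_ord // val_eqE eq_sym; case: (c == c').
have := mxrankM_maxr (rowsub g (1%:M%R : 'M[F]_(Ls.+1 * Lt.+1))) (Pmat F M N Ls Lt).
by rewrite -rowsubE E mxrank1.
Qed.

Theorem theorem2 (F : fieldType) (Ls Lt M N : nat) :
  (0 < M)%N -> (0 < N)%N -> coprime M N ->
  \rank (Pmat F M N Ls Lt) = Rr M N Ls Lt /\
  Rr M N Ls Lt =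
    (if (M < Ls.+1) && (N < Lt.+1)
     then N * Ls.+1 + M * Lt.+1 - M * N
     else Ls.+1 * Lt.+1)%N.
Proof.
move=> M0 N0 co; split; first exact: rankP.
by rewrite /Rr /zetas size_sort count_pos.
Qed.
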